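(* Let $\mathscr{F}$ be a family of languages closed under union, product, Kleene closure and rational transductions. Let $S$ be a semigroup, $\sigma : X^+ \to S$ a choice of generators for $S$, $S^0$ the semigroup $S$ with a new zero $0$ adjoined, $Y = X \cup \{z\}$ for a new letter $z$, and $\tau : Y^+ \to S^0$ the extension of $\sigma$ with $z\tau = 0$. Then $L_\sigma(S) \in \mathscr{F}$ if and only if $L_\tau(S^0) \in \mathscr{F}$.
   Context: For a semigroup $S$, $S^1$ denotes the monoid obtained by adjoining a new identity $1$ (even if $S$ already has one). A choice of generators for $S$ is a surjective morphism $\sigma : X^+ \to S$ from a free semigroup; it extends uniquely to $\sigma^1 : X^* \to S^1$. Let $\overline{X} = \{\overline{x} : x \in X\}$ be a set of formal inverses, $\hat{X} = X \cup \overline{X}$. The loop automaton of $S$ with respect to $\sigma$ is the directed labelled graph with vertex set $S^1$, having for each $a \in S^1$ and $x \in X$ an edge from $a$ to $a(x\sigma)$ labelled $x$ and an edge from $a(x\sigma)$ to $a$ labelled $\overline{x}$. The loop problem $L_\sigma(S) \subseteq \hat{X}^*$ is the set of words labelling paths from $1$ to $1$ in this graph (including the empty word). A rational transduction is a relation between free monoids realised by a finite-state transducer; the image of a language under it is the set of outputs paired with inputs from the language. *)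

(* Defs.v *)
From mathcomp Require Import all_boot.
Set Implicit Arguments. Unset Strict Implicit. Unset Printing Implicit Defensive.

Definition language (A : finType) := seq A -> Prop.

Definition lang_family := forall A : finType, language A -> Prop.

Definition lang_union (A : finType) (L1 L2 : language A) : language A :=
  fun w => L1 w \/ L2 w.
Definition lang_prod (A : finType) (L1 L2 : language A) : language A :=
  fun w => exists u v, w = u ++ v /\ L1 u /\ L2 v.
Definition lang_star (A : finType) (L : language A) : language A :=
  fun w => exists ws : seq (seq A), (forall u, u \in ws -> L u) /\ w = flatten ws.

Record transducer (A B : finType) := Transducer {
  tstate : finType;
  tinit : pred tstate;
  tfinal : pred tstate;
  ttrans : seq (tstate * seq A * seq B * tstate) }.

Inductive trun (A B : finType) (T : transducer A B)
  : tstate T -> seq A -> seq B -> tstate T -> Prop :=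
| trun_nil q : trun q [::] [::] q
| trun_cons q u v q' u' v' q'' :
    (q, u, v, q') \in ttrans T -> trun q' u' v' q'' ->
    trun q (u ++ u') (v ++ v') q''.

Definition transduce (A B : finType) (T : transducer A B) (L : language A)
  : language B :=
  fun v => exists u (q q' : tstate T),
    L u /\ q \in @tinit A B T /\ q' \in @tfinal A B T /\ @trun A B T q u v q'.

Definition closed_union (F : lang_family) :=
  forall (A : finType) (L1 L2 : language A), F A L1 -> F A L2 -> F A (lang_union L1 L2).
Definition closed_prod (F : lang_family) :=
  forall (A : finType) (L1 L2 : language A), F A L1 -> F A L2 -> F A (lang_prod L1 L2).
Definition closed_star (F : lang_family) :=
  forall (A : finType) (L : language A), F A L -> F A (lang_star L).
Definition closed_transduction (F : lang_family) :=
  forall (A B : finType) (T : transducer A B) (L : language A),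
    F A L -> F B (transduce T L).

Definition associative_op (T : Type) (op : T -> T -> T) :=
  forall a b c, op a (op b c) = op (op a b) c.

(* sigma^+ : X^+ -> S applied to the nonempty word x :: w. *)
Definition eval_word (T : Type) (op : T -> T -> T) (X : Type) (g : X -> T)
  (x : X) (w : seq X) : T :=
  foldl (fun acc y => op acc (g y)) (g x) w.

Definition generates (T : Type) (op : T -> T -> T) (X : Type) (g : X -> T) :=
  forall s : T, exists x w, eval_word op g x w = s.

(* S^1 represented as option T, None being the adjoined identity 1;
   right multiplication of a in S^1 by s in S. *)
Definition mul1 (T : Type) (op : T -> T -> T) (a : option T) (s : T) : option T :=
  match a with None => Some s | Some b => Some (op b s) end.

(* S^0 represented as option T, None being the adjoined zero 0. *)
Definition op0 (T : Type) (op : T -> T -> T) (a b : option T) : option T :=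
  match a, b with Some a, Some b => Some (op a b) | _, _ => None end.

(* tau : Y -> S^0 with Y = option X, None = z, z tau = 0. *)
Definition gen0 (T : Type) (X : Type) (g : X -> T) (y : option X) : option T :=
  match y with Some x => Some (g x) | None => None end.

(* Hat X = X + X: inl x is x, inr x is the formal inverse xbar.
   loop_reach a w b : w labels a path from a to b in the loop automaton
   (vertex set S^1, edge a -x-> a(x sigma), edge a(x sigma) -xbar-> a). *)
Fixpoint loop_reach (T : Type) (op : T -> T -> T) (X : Type) (g : X -> T)
  (a : option T) (w : seq (X + X)) (b : option T) {struct w} : Prop :=
  match w with
  | [::] => a = b
  | inl x :: w' => loop_reach op g (mul1 op a (g x)) w' b
  | inr x :: w' => exists c, mul1 op c (g x) = a /\ loop_reach op g c w' b
  end.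

Definition loop_problem (T : Type) (op : T -> T -> T) (X : finType) (g : X -> T)
  : language (X + X)%type :=
  fun w => loop_reach op g None w None.

(* Main.v *)
Require Import Defs.
From mathcomp Require Import all_boot.
From Stdlib Require Import FunctionalExtensionality PropExtensionality.
Set Implicit Arguments. Unset Strict Implicit. Unset Printing Implicit Defensive.

Definition emb (X : Type) (a : (X + X)%type) : (option X + option X)%type :=
  match a with inl x => inl (Some x) | inr x => inr (Some x) end.
Definition lft (S : Type) (a : option S) : option (option S) :=
  match a with None => None | Some s => Some (Some s) end.

Lemma reach_cat (S : Type) (op : S -> S -> S) (X : Type) (g : X -> S) u v a b :
  loop_reach op g a (u ++ v) b <-> exists c, loop_reach op g a u c /\ loop_reach op g c v b.
Proof.
elim: u a => [|[x|x] u IH] a /=.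
- split; [move=> H; exists a; split=>//|by case=> c [-> ]].
- exact: IH.
- split.
  + case=> c [Hc H]; case/IH: H => d [H1 H2]; exists d; split=>//; exists c; done.
  + case=> d [[c [Hc H1]] H2]; exists c; split=>//; apply/IH; exists d; done.
Qed.

Lemma mul1_lft (S : Type) (op : S -> S -> S) (c : option S) s :
  mul1 (op0 op) (lft c) (Some s) = lft (mul1 op c s).
Proof. by case: c. Qed.

Lemma K1 (S : Type) (op : S -> S -> S) (X : Type) (g : X -> S) w a b :
  loop_reach (op0 op) (gen0 g) (lft a) (map (@emb _) w) (lft b) <-> loop_reach op g a w b.
Proof.
elim: w a => [|[x|x] w IH] a /=.
- split; first by case: a; case: b => // ? ? [->].
  by move=> ->.
- by rewrite mul1_lft; apply: IH.
- split.
  + case=> [[[t|]|] [Hc H]]; case: a Hc => [a|] //= [] <-.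
    * by exists (Some t); split=> //; apply/IH.
    * by exists None; split=> //; apply/IH.
  + case=> c [Hc H]; exists (lft c); split; last exact/IH.
    by case: c {H} Hc => [c|] /= <-.
Qed.

Lemma zero_loop (S : Type) (op : S -> S -> S) (X : Type) (g : X -> S) m :
  loop_reach (op0 op) (gen0 g) (Some None) m (Some None).
Proof. by elim: m => [|[y|y] m IH] //=; exists (Some None). Qed.

Lemma decomp (S : Type) (op : S -> S -> S) (X : Type) (g : X -> S) v :
  (forall c, loop_reach (op0 op) (gen0 g) (lft c) v None ->
     (exists w, v = map (@emb _) w /\ loop_reach op g c w None) \/
     (exists u m v' b c', v = map (@emb _) u ++ inl None :: m ++ inr None :: map (@emb _) v'
        /\ loop_reach op g c u b /\ loop_reach op g c' v' None)) /\
  (loop_reach (op0 op) (gen0 g) (Some None) v None ->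
     exists m v' c', v = m ++ inr None :: map (@emb _) v' /\ loop_reach op g c' v' None).
Proof.
elim: v => [|y v [IHP IHQ]].
  split=> //; move=> c /= H; left; exists [::]; split=> //; by case: c H.
have HP : forall c, loop_reach (op0 op) (gen0 g) (lft c) v None ->
  (exists m v' c', inr None :: v = m ++ inr None :: map (@emb _) v' /\ loop_reach op g c' v' None).
  move=> c /IHP [[w [-> Hw]] | [u [m [v' [b [c' [-> [H1 H2]]]]]]]].
    by exists [::], w, c.
  exists (inr None :: map (@emb _) u ++ inl None :: m), v', c'; split=> //.
  by rewrite /= -catA.
split.
- move=> c; case: y => [[x|]|[x|]] /= H.
  + rewrite mul1_lft in H.
    case: (IHP _ H) => [[w [-> Hw]] | [u [m [v' [b [c' [-> [H1 H2]]]]]]]].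
      by left; exists (inl x :: w).
    by right; exists (inl x :: u), m, v', b, c'.
  + have E : mul1 (op0 op) (lft c) None = Some None by case: c {H}.
    rewrite E in H; case: (IHQ H) => m [v' [c' [-> H2]]].
    by right; exists [::], m, v', c, c'.
  + case: H => [[[t|]|] [Hc H]]; case: c Hc => [c|] //= [] <-.
    * case: (IHP (Some t) H) => [[w [-> Hw]] | [u [m [v' [b [c' [-> [H1 H2]]]]]]]].
        by left; exists (inr x :: w); split=> //; exists (Some t).
      by right; exists (inr x :: u), m, v', b, c'; split=> //; split=> //; exists (Some t).
    * case: (IHP None H) => [[w [-> Hw]] | [u [m [v' [b [c' [-> [H1 H2]]]]]]]].
        by left; exists (inr x :: w); split=> //; exists None.
      by right; exists (inr x :: u), m, v', b, c'; split=> //; split=> //; exists None.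
  + by case: H => [[[t|]|] [Hc H]]; case: c Hc.
- case: y => [y|[x|]] /= H.
  + have E : mul1 (op0 op) (Some None) (gen0 g y) = Some None by [].
    case: (IHQ H) => m [v' [c' [-> H2]]].
    by exists (inl y :: m), v', c'.
  + case: H => [[[t|]|] [Hc H]] //.
    case: (IHQ H) => m [v' [c' [-> H2]]].
    by exists (inr (Some x) :: m), v', c'.
  + case: H => [[[t|]|] [Hc H]].
    * exact: (HP (Some t) H).
    * case: (IHQ H) => m [v' [c' [-> H2]]].
      by exists (inr None :: m), v', c'.
    * exact: (HP None H).
Qed.

Lemma recomp (S : Type) (op : S -> S -> S) (X : Type) (g : X -> S) u m v' b c :
  loop_reach op g None u b -> loop_reach op g c v' None ->
  loop_reach (op0 op) (gen0 g) None
    (map (@emb _) u ++ inl None :: m ++ inr None :: map (@emb _) v') None.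
Proof.
move=> H1 H2; apply/reach_cat; exists (lft b); split; first exact: (proj2 (K1 op g u None b) H1).
rewrite /=.
have -> : mul1 (op0 op) (lft b) None = Some None by case: b {H1}.
apply/reach_cat; exists (Some None); split; first exact: zero_loop.
exists (lft c); split; first by case: c {H2}.
exact: (proj2 (K1 op g v' c None) H2).
Qed.

Lemma trun_app (A B : finType) (T : transducer A B) q u v q1 u' v' q2 :
  @trun A B T q u v q1 -> @trun A B T q1 u' v' q2 -> @trun A B T q (u ++ u') (v ++ v') q2.
Proof.
elim=> // {}q u0 v0 q0 u1 v1 q3 H _ IH H2.
rewrite -!catA; exact: trun_cons H (IH H2).
Qed.

Lemma trun1 (A B : finType) (T : transducer A B) q u v q' :
  (q, u, v, q') \in ttrans T -> @trun A B T q u v q'.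
Proof. by move=> H; rewrite -(cats0 u) -(cats0 v); apply: trun_cons H (trun_nil _). Qed.

Lemma loop_map (A B : finType) (T : transducer A B) q (f : A -> B) :
  (forall a, (q, [:: a], [:: f a], q) \in ttrans T) -> forall u, @trun A B T q u (map f u) q.
Proof.
move=> H; elim=> [|a u IH]; first exact: trun_nil.
exact: (trun_app (trun1 (H a)) IH).
Qed.

Lemma loop_skip (A B : finType) (T : transducer A B) q :
  (forall a, (q, [:: a], [::], q) \in ttrans T) -> forall u, @trun A B T q u [::] q.
Proof.
move=> H; elim=> [|a u IH]; first exact: trun_nil.
exact: (trun_app (trun1 (H a)) IH).
Qed.

Lemma loop_gen (A B : finType) (T : transducer A B) q :
  (forall b, (q, [::], [:: b], q) \in ttrans T) -> forall m, @trun A B T q [::] m q.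
Proof.
move=> H; elim=> [|b m IH]; first exact: trun_nil.
exact: (trun_app (trun1 (H b)) IH).
Qed.

Definition mapT (A B : finType) (f : A -> B) : transducer A B :=
  @Transducer A B unit predT predT [seq (tt, [:: a], [:: f a], tt) | a <- enum A].

Lemma mapT_img (A B : finType) (f : A -> B) (L : language A) v :
  transduce (mapT f) L v <-> exists u, L u /\ v = map f u.
Proof.
split.
- case=> u [q [q' [Lu [_ [_ H]]]]]; exists u; split=> //.
  elim: H {Lu} => // {}q u0 v0 q0 u1 v1 q3 /mapP [a _ [_ -> -> _]] _ ->; done.
- case=> u [Lu ->]; exists u, tt, tt; split=> //; split=> //; split=> //.
  by apply: loop_map => a; apply/mapP; exists a; rewrite ?mem_enum.
Qed.

Definition Xh (X : finType) : finType := (X + X)%type.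
Definition Yh (X : finType) : finType := (option X + option X)%type.

Definition T3 (X : finType) : transducer (Yh X) (Xh X) :=
  @Transducer (Yh X) (Xh X) unit predT predT
    [seq (tt, [:: @emb X a], [:: a], tt) | a <- enum (Xh X)].

Lemma T3_img (X : finType) (L : language (Yh X)) v :
  transduce (T3 X) L v <-> L (map (@emb X) v).
Proof.
split.
- case=> u [q [q' [Lu [_ [_ H]]]]].
  suff <- : u = map (@emb X) v by [].
  elim: H {Lu} => // {}q u0 v0 q0 u1 v1 q3 /mapP [a _ [_ -> -> _]] _ ->; done.
- move=> Lv; exists (map (@emb X) v), tt, tt; split=> //; split=> //; split=> //.
  elim: v {Lv} => [|a v IH]; first exact: trun_nil.
  have H : (tt, [:: @emb X a], [:: a], tt) \in ttrans (T3 X).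
    by apply/mapP; exists a; rewrite ?mem_enum //.
  exact: (trun_app (trun1 H) IH).
Qed.

Definition T1 (X : finType) : transducer (Xh X) (Yh X) :=
  @Transducer (Xh X) (Yh X) bool (pred1 false) (pred1 true)
    ([seq (false, [:: a], [:: @emb X a], false) | a <- enum (Xh X)] ++
     (false, [::], [:: inl None], true) ::
     [seq (true, [:: a], [::], true) | a <- enum (Xh X)]).

Lemma T1_inv (X : finType) q u v q' : @trun _ _ (T1 X) q u v q' ->
  match q, q' with
  | false, false => v = map (@emb X) u
  | false, true => exists u1 u2, u = u1 ++ u2 /\ v = rcons (map (@emb X) u1) (inl None)
  | true, true => v = [::]
  | true, false => False
  end.
Proof.
elim; first by case.
move=> {}q u0 v0 q0 u1 v1 q3.
rewrite mem_cat in_cons => /or3P [/mapP [a _ [E1 E2 E3 E4]] | /eqP [E1 E2 E3 E4] | /mapP [a _ [E1 E2 E3 E4]]] _; subst; case: q3 => //.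
- by case=> x [y [-> ->]]; exists (a :: x), y.
- by move=> ->.
- by move=> ->; exists [::], u1.
Qed.

Lemma T1_img (X : finType) (L : language (Xh X)) v :
  transduce (T1 X) L v <-> exists u1 u2, L (u1 ++ u2) /\ v = rcons (map (@emb X) u1) (inl None).
Proof.
split.
- case=> u [q [q' [Lu [Hq [Hq' H]]]]].
  move: Hq Hq' => /eqP Hq /eqP Hq'; subst q q'.
  case: (T1_inv H) => u1 [u2 [E ->]]; subst u; by exists u1, u2.
- case=> u1 [u2 [Lu ->]]; exists (u1 ++ u2), false, true; split=> //; split=> //; split=> //.
  rewrite -cats1 -[[:: inl None]]cats0.
  apply: trun_app.
    by apply: loop_map => a; rewrite mem_cat; apply/orP; left; apply/mapP; exists a; rewrite ?mem_enum //.
  have H1 : (false, [::], [:: inl None], true) \in ttrans (T1 X).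
    by rewrite mem_cat in_cons eqxx orbT.
  have H2 : forall u, @trun _ _ (T1 X) true u [::] true.
    by apply: loop_skip => a; rewrite mem_cat in_cons; apply/orP; right; apply/orP; right; apply/mapP; exists a; rewrite ?mem_enum //.
  exact: (trun_app (trun1 H1) (H2 u2)).
Qed.

Definition T2 (X : finType) : transducer (Xh X) (Yh X) :=
  @Transducer (Xh X) (Yh X) (option bool) (pred1 None) (pred1 (Some true))
    ([seq (None, [::], [:: y], None) | y <- enum (Yh X)] ++
     (None, [::], [:: inr None], Some false) ::
     [seq (Some false, [:: a], [::], Some false) | a <- enum (Xh X)] ++
     (Some false, [::], [::], Some true) ::
     [seq (Some true, [:: a], [:: @emb X a], Some true) | a <- enum (Xh X)]).

Lemma T2_inv (X : finType) q u v q' : @trun _ _ (T2 X) q u v q' ->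
  match q, q' with
  | None, None => u = [::]
  | None, Some false => exists m, v = m ++ [:: inr None]
  | None, Some true => exists m u1 u2, u = u1 ++ u2 /\ v = m ++ inr None :: map (@emb X) u2
  | Some false, Some false => v = [::]
  | Some false, Some true => exists u1 u2, u = u1 ++ u2 /\ v = map (@emb X) u2
  | Some true, Some true => v = map (@emb X) u
  | _, _ => False
  end.
Proof.
elim; first by case=> [[]|].
move=> {}q u0 v0 q0 u1 v1 q3.
rewrite mem_cat in_cons mem_cat in_cons.
case/or3P=> [/mapP [a _ [E1 E2 E3 E4]] | /eqP [E1 E2 E3 E4] | /orP [/mapP [a _ [E1 E2 E3 E4]] | /orP [/eqP [E1 E2 E3 E4] | /mapP [a _ [E1 E2 E3 E4]]]]] _;
  subst; case: q3 => [[]|] //=.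
- by case=> m [x [y [-> ->]]]; exists (a :: m), x, y.
- by case=> m ->; exists (a :: m).
- by case=> x [y [-> ->]]; exists [::], x, y.
- by move=> ->; exists [::].
- by case=> x [y [-> ->]]; exists (a :: x), y.
- by move=> ->; exists [::], u1.
- by move=> ->.
Qed.

Lemma T2_img (X : finType) (L : language (Xh X)) v :
  transduce (T2 X) L v <-> exists m u1 u2, L (u1 ++ u2) /\ v = m ++ inr None :: map (@emb X) u2.
Proof.
split.
- case=> u [q [q' [Lu [Hq [Hq' H]]]]].
  move: Hq Hq' => /eqP Hq /eqP Hq'; subst q q'.
  case: (T2_inv H) => m [u1 [u2 [E ->]]]; subst u; by exists m, u1, u2.
- case=> m [u1 [u2 [Lu ->]]]; exists (u1 ++ u2), None, (Some true); split=> //; split=> //; split=> //.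
  have H0 : forall m, @trun _ _ (T2 X) None [::] m None.
    apply: loop_gen => b; rewrite mem_cat; apply/orP; left; apply/mapP; exists b; rewrite ?mem_enum //.
  have H1 : (None, [::], [:: inr None], Some false) \in ttrans (T2 X).
    by rewrite mem_cat in_cons eqxx orbT.
  have H2 : forall u, @trun _ _ (T2 X) (Some false) u [::] (Some false).
    apply: loop_skip => a; rewrite mem_cat in_cons mem_cat; apply/orP; right; apply/orP; right.
    apply/orP; left; apply/mapP; exists a; rewrite ?mem_enum //.
  have H3 : (Some false, [::], [::], Some true) \in ttrans (T2 X).
    by rewrite mem_cat in_cons mem_cat in_cons eqxx !orbT.
  have H4 : forall u, @trun _ _ (T2 X) (Some true) u (map (@emb X) u) (Some true).
    apply: loop_map => a; rewrite mem_cat in_cons mem_cat in_cons; apply/orP; right; apply/orP; right.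
    apply/orP; right; apply/orP; right; apply/mapP; exists a; rewrite ?mem_enum //.
  have := trun_app (H0 m) (trun_app (trun1 H1) (trun_app (H2 u1) (trun_app (trun1 H3) (H4 u2)))).
  by rewrite /= -cat1s.
Qed.

Lemma fwd_acc (S : Type) (op : S -> S -> S) (X : Type) (g : X -> S) w acc :
  loop_reach op g (Some acc) (map inl w) (Some (foldl (fun acc y => op acc (g y)) acc w)).
Proof. by elim: w acc => [|y w IH] acc //=; apply: IH. Qed.

Lemma bwd_acc (S : Type) (op : S -> S -> S) (X : Type) (g : X -> S) w acc :
  loop_reach op g (Some (foldl (fun acc y => op acc (g y)) acc w)) (map inr (rev w)) (Some acc).
Proof.
elim: w acc => [|y w IH] acc //=.
rewrite rev_cons map_rcons -cats1; apply/reach_cat; exists (Some (op acc (g y))).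
split; first exact: IH.
by exists (Some acc).
Qed.

Lemma to_one (S : Type) (op : S -> S -> S) (X : Type) (g : X -> S) :
  generates op g -> forall b, exists u, loop_reach op g b u None.
Proof.
move=> hg [s|]; last by exists [::].
case: (hg s) => x [w <-]; exists (map inr (rev (x :: w))).
rewrite rev_cons map_rcons -cats1; apply/reach_cat; exists (Some (g x)); split.
  exact: bwd_acc.
by exists None.
Qed.

Lemma from_one (S : Type) (op : S -> S -> S) (X : Type) (g : X -> S) :
  generates op g -> forall c, exists u, loop_reach op g None u c.
Proof.
move=> hg [s|]; last by exists [::].
case: (hg s) => x [w <-]; exists (map inl (x :: w)); exact: fwd_acc.
Qed.

Lemma pref (S : Type) (op : S -> S -> S) (X : finType) (g : X -> S) :
  generates op g -> forall u,
  (exists b, loop_reach op g None u b) <-> exists u', loop_problem op g (u ++ u').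
Proof.
move=> hg u; split.
- case=> b H; case: (to_one hg b) => u' H'; exists u'; apply/reach_cat; by exists b.
- by case=> u' /reach_cat [b [H _]]; exists b.
Qed.

Lemma suff_ (S : Type) (op : S -> S -> S) (X : finType) (g : X -> S) :
  generates op g -> forall v,
  (exists c, loop_reach op g c v None) <-> exists u', loop_problem op g (u' ++ v).
Proof.
move=> hg v; split.
- case=> c H; case: (from_one hg c) => u' H'; exists u'; apply/reach_cat; by exists c.
- by case=> u' /reach_cat [c [_ H]]; exists c.
Qed.

Theorem theorem3p4 (F : lang_family)
  (hU : closed_union F) (hP : closed_prod F) (hS : closed_star F)
  (hT : closed_transduction F)
  (S : Type) (op : S -> S -> S) (hassoc : associative_op op)
  (X : finType) (sigma : X -> S) (hgen : generates op sigma) :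
  F (X + X)%type (loop_problem op sigma) <->
  F (option X + option X)%type (loop_problem (op0 op) (gen0 sigma)).
Proof.
split => HF.
- have E : loop_problem (op0 op) (gen0 sigma) =
    lang_union (transduce (mapT (@emb X)) (loop_problem op sigma))
      (lang_prod (transduce (T1 X) (loop_problem op sigma))
                 (transduce (T2 X) (loop_problem op sigma))).
    apply: functional_extensionality => v; apply: propositional_extensionality.
    rewrite /lang_union /lang_prod.
    split.
    + move=> H; case: ((decomp op sigma v).1 None H) =>
        [[w [-> Hw]] | [u [m [v' [b [c' [-> [H1 H2]]]]]]]].
        by left; apply/mapT_img; exists w.
      right; exists (rcons (map (@emb X) u) (inl None)), (m ++ inr None :: map (@emb X) v').
      split; first by rewrite -cats1 -catA.
      split.
        apply/T1_img; case: (proj1 (pref hgen u) (ex_intro _ b H1)) => u' Hu'.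
        by exists u, u'.
      apply/T2_img; case: (proj1 (suff_ hgen v') (ex_intro _ c' H2)) => u' Hu'.
      by exists m, u', v'.
    + case.
        case/mapT_img => w [Hw ->]; exact: (proj2 (K1 op sigma w None None) Hw).
      case=> p [q [-> [/T1_img [u1 [u2 [L1 ->]]] /T2_img [m [u3 [u4 [L2 ->]]]]]]].
      case: (proj2 (pref hgen u1) (ex_intro _ u2 L1)) => b H1.
      case: (proj2 (suff_ hgen u4) (ex_intro _ u3 L2)) => c H2.
      rewrite -cats1 -catA /=; exact: (recomp m H1 H2).
  rewrite E; apply: hU; first exact: hT.
  by apply: hP; apply: hT.
- have E : loop_problem op sigma = transduce (T3 X) (loop_problem (op0 op) (gen0 sigma)).
    apply: functional_extensionality => v; apply: propositional_extensionality.
    rewrite T3_img; symmetry; exact: (K1 op sigma v None None).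
  by rewrite E; apply: hT.
Qed.
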